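(* Let $b\geq 3$ and $h=\left\lceil\frac{(b-1)^2+1}{2}\right\rceil$. Then the zero entries of the Boolean matrix $(W_b)^{h-1}(W_b^t)^{h-1}$ occur only in the $(b,\lfloor \frac{b}{2}\rfloor)$ and $(\lfloor \frac{b}{2}\rfloor, b)$ positions.
   Context: Matrix products are Boolean ($1+1=1$). For $b\geq 3$, $W_b$ is the $b\times b$ $(0,1)$-matrix whose entries equal to $1$ are exactly those in positions $(i,i+1)$ for $1\leq i\leq b-1$, together with positions $(b-1,1)$ and $(b,1)$; all other entries are $0$. (Its digraph is the Wielandt graph: the cycle $1\to 2\to\cdots\to b\to 1$ plus the arc $b-1\to 1$.) $W_b^t$ denotes the transpose. *)

(* Defs.v *)
From mathcomp Require Import all_boot.
Unset Printing Implicit Defensive.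

(* Boolean (0,1)-matrices of size n x n, indexed by 'I_n; index i : 'I_n
   stands for the paper's 1-based index i+1. *)
Definition bmat (n : nat) := 'I_n -> 'I_n -> bool.

Definition bmul n (A B : bmat n) : bmat n :=
  fun i j => [exists k : 'I_n, A i k && B k j].

Definition bid (n : nat) : bmat n := fun i j => i == j.

Definition bpow n (A : bmat n) (k : nat) : bmat n := iter k (@bmul n A) (@bid n).

Definition btr n (A : bmat n) : bmat n := fun i j => A j i.

(* Wielandt matrix W_b: ones exactly at (i, i+1) for 1 <= i <= b-1,
   and at (b-1, 1) and (b, 1) (1-based positions). *)
Definition W (b : nat) : bmat b :=
  fun i j => (j.+1 == i.+2) || ((j.+1 == 1) && ((i.+1 == b.-1) || (i.+1 == b))).
Arguments bmul {n}. Arguments bpow {n}. Arguments btr {n}.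

(* Main.v *)
Require Import Defs.
From mathcomp Require Import all_boot.
From mathcomp Require Import zify.
Set Implicit Arguments. Unset Strict Implicit.

Lemma bpowS n (A : bmat n) t x y :
  bpow A t.+1 x y = [exists l, A x l && bpow A t l y].
Proof. by []. Qed.

Lemma bpow0 n (A : bmat n) x y : bpow A 0 x y = (x == y).
Proof. by []. Qed.

Lemma bpow_add n (A : bmat n) s t x y z :
  bpow A s x y -> bpow A t y z -> bpow A (s + t) x z.
Proof.
elim: s x => [|s IH] x.
  by rewrite bpow0 add0n => /eqP ->.
rewrite addSn bpowS => /existsP [l /andP [Hxl Hl]] Hyz.
rewrite bpowS; apply/existsP; exists l; rewrite Hxl /=; exact: IH.
Qed.

Lemma bpow_tr n (A : bmat n) t x y : bpow A t y x -> bpow (btr A) t x y.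
Proof.
elim: t x y => [|t IH] x y.
  by rewrite !bpow0 eq_sym.
rewrite bpowS => /existsP [l /andP [Hyl Hlx]].
rewrite -addn1; apply: (bpow_add (IH _ _ Hlx)).
rewrite bpowS; apply/existsP; exists y; rewrite /btr Hyl /=.
by rewrite /bid eqxx.
Qed.

Lemma fwd b d (x y : 'I_b) : nat_of_ord y = nat_of_ord x + d -> bpow (W b) d x y.
Proof.
elim: d x => [|d IH] x Hy.
  by rewrite bpow0; apply/eqP/val_inj; rewrite /= Hy addn0.
have Hl : x.+1 < b by have := ltn_ord y; lia.
rewrite bpowS; apply/existsP; exists (Ordinal Hl); apply/andP; split.
  by rewrite /W /= eqxx.
apply: IH => /=; lia.
Qed.

Lemma Wz b (x z : 'I_b) : nat_of_ord z = 0 ->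
  (nat_of_ord x = b - 2 \/ nat_of_ord x = b - 1) -> 2 < b -> W b x z.
Proof.
move=> Hz Hx hb; rewrite /W Hz; apply/orP; right; rewrite eqxx /=.
by case: Hx => H; apply/orP; [left|right]; apply/eqP; lia.
Qed.

Lemma toz1 b (hb : 2 < b) (x z : 'I_b) : nat_of_ord z = 0 ->
  bpow (W b) (b - x) x z.
Proof.
move=> Hz.
have He : b - 1 < b by lia.
have H1 : bpow (W b) (b - 1 - x) x (Ordinal He) by apply: fwd => /=; have := ltn_ord x; lia.
have -> : b - x = (b - 1 - x) + 1 by have := ltn_ord x; lia.
apply: (bpow_add H1); rewrite bpowS; apply/existsP; exists z.
by rewrite bpow0 eqxx andbT; apply: Wz => //=; right.
Qed.

Lemma toz2 b (hb : 2 < b) (x z : 'I_b) : nat_of_ord z = 0 -> x <= b - 2 ->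
  bpow (W b) (b - 1 - x) x z.
Proof.
move=> Hz Hx.
have He : b - 2 < b by lia.
have H1 : bpow (W b) (b - 2 - x) x (Ordinal He) by apply: fwd => /=; lia.
have -> : b - 1 - x = (b - 2 - x) + 1 by lia.
apply: (bpow_add H1); rewrite bpowS; apply/existsP; exists z.
by rewrite bpow0 eqxx andbT; apply: Wz => //=; left.
Qed.

Lemma loop b (hb : 2 < b) (z : 'I_b) : nat_of_ord z = 0 ->
  forall n y, y <= n -> bpow (W b) (n * (b - 1) + y) z z.
Proof.
move=> Hz; elim=> [|n IH] y Hy.
  have -> : y = 0 by lia.
  by rewrite mul0n addn0 bpow0.
case Hyn: (y <= n).
  have -> : n.+1 * (b - 1) + y = (b - 1 - z) + (n * (b - 1) + y) by rewrite mulSn; lia.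
  apply: bpow_add (toz2 hb Hz _) (IH _ Hyn); lia.
have -> : n.+1 * (b - 1) + y = (b - z) + (n * (b - 1) + n) by rewrite mulSn; lia.
exact: bpow_add (toz1 hb z Hz) (IH _ (leqnn n)).
Qed.

Lemma reach b (hb : 2 < b) (x k : 'I_b) n y t bm : bm.+1 = b ->
  y <= n.+1 -> (nat_of_ord x = b - 1 -> 0 < y) ->
  t = b - x - 1 + n * bm + y + k -> bpow (W b) t x k.
Proof.
move=> Hbm Hy Hx Ht.
have Hb0 : 0 < b by lia.
pose z := Ordinal Hb0.
have Hz : nat_of_ord z = 0 by [].
have Hbm' : bm = b - 1 by lia.
rewrite Hbm' in Ht.
have Hk : bpow (W b) k z k by apply: fwd.
case: y Hy Hx Ht => [|y] Hy Hx Ht.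
  have Hxb : x <= b - 2 by have := ltn_ord x; lia.
  have -> : t = (b - 1 - x) + (n * (b - 1) + 0) + k by lia.
  apply: bpow_add _ Hk; apply: bpow_add (toz2 hb Hz Hxb) _.
  exact: loop.
have -> : t = (b - x) + (n * (b - 1) + y) + k by have := ltn_ord x; lia.
apply: bpow_add _ Hk; apply: bpow_add (toz1 hb x Hz) _.
apply: loop => //; lia.
Qed.

Lemma Pwit b m (x y k : 'I_b) : bpow (W b) m x k -> bpow (W b) m y k ->
  bmul (bpow (W b) m) (bpow (btr (W b)) m) x y.
Proof.
by move=> H1 H2; apply/existsP; exists k; rewrite H1; apply: bpow_tr.
Qed.

Theorem lemma2p4 (b : nat) (hb : 3 <= b) :
  let h := ((b - 1) ^ 2 + 1 + 1) %/ 2 in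
  let P := bmul (bpow (W b) (h - 1)) (bpow (btr (W b)) (h - 1)) in
  forall i j : 'I_b, P i j = false ->
    ((i.+1 == b) && (j.+1 == b %/ 2)) || ((i.+1 == b %/ 2) && (j.+1 == b)).
Proof.
move=> h P.
have hb' : 2 < b by [].
have [c [e [He Hb]]] : exists c e, e <= 1 /\ b = 2 * c + e.
  exists b./2, (odd b); split; first by case: odd.
  by rewrite -[b in LHS]odd_double_half; lia.
have Hc : b %/ 2 = c by rewrite Hb; lia.
rewrite Hc.
have key : forall x y : 'I_b, x <= y -> ~ (x.+1 = c /\ y.+1 = b) ->
    exists k : 'I_b, bpow (W b) (h - 1) x k && bpow (W b) (h - 1) y k.
  have Hb2 : b - 2 < b by lia.
  pose k2 := Ordinal Hb2.
  move=> x y Hxy Hex.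
  have Hyb := ltn_ord y.
  case: e He Hb => [|[|//]] _ Hb.
  -
    have [c' Ec] : exists c', c = c'.+2 by exists c.-2; lia.
    have Hm : h - 1 = 2 * c'.+2 * c'.+1.
      rewrite /h Hb Ec.
      have -> : 2 * c'.+2 + 0 - 1 = 2 * c' + 3 by lia.
      have -> : (2 * c' + 3) ^ 2 + 1 + 1 = (2 * c'.+2 * c'.+1 + 1) * 2 + 1 by nia.
      rewrite divnMDl //; lia.
    rewrite Hm.
    case: (leqP (y - x) (c - 1)) => Hd.
    + exists y; apply/andP; split.
        apply: (reach hb' (x:=x) (k:=y) (n:=c') (y:=(c - 1 - (y - x))) (bm:=(2 * c'.+2 - 1))); rewrite ?Ec; lia.
      apply: (reach hb' (x:=y) (k:=y) (n:=c') (y:=(c - 1)) (bm:=(2 * c'.+2 - 1))); rewrite ?Ec; lia.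
    + exists x; apply/andP; split.
        apply: (reach hb' (x:=x) (k:=x) (n:=c') (y:=(c - 1)) (bm:=(2 * c'.+2 - 1))); rewrite ?Ec; lia.
      apply: (reach hb' (x:=y) (k:=x) (n:=c'.+1) (y:=((y - x) - c)) (bm:=(2 * c'.+2 - 1))); rewrite ?Ec; lia.
  -
    have [c' Ec] : exists c', c = c'.+1 by exists c.-1; lia.
    have Hm : h - 1 = 2 * c * c.
      rewrite /h Hb Ec.
      have -> : 2 * c'.+1 + 1 - 1 = 2 * c'.+1 by lia.
      have -> : (2 * c'.+1) ^ 2 + 1 + 1 = 2 * (2 * c'.+1 * c'.+1 + 1) by nia.
      rewrite mulKn //; lia.
    rewrite Hm.
    case: (leqP (y - x) c) => Hd.
    + case: (eqVneq (nat_of_ord x) (b - 1)) => Hx.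
        exists k2; apply/andP; split.
          apply: (reach hb' (x:=x) (k:=k2) (n:=c') (y:=1) (bm:=(2 * c'.+1))); rewrite /= ?Ec; lia.
        apply: (reach hb' (x:=y) (k:=k2) (n:=c') (y:=1) (bm:=(2 * c'.+1))); rewrite /= ?Ec; lia.
      exists x; apply/andP; split.
        apply: (reach hb' (x:=x) (k:=x) (n:=c') (y:=0) (bm:=(2 * c'.+1))); rewrite ?Ec; lia.
      apply: (reach hb' (x:=y) (k:=x) (n:=c') (y:=(y - x)) (bm:=(2 * c'.+1))); rewrite ?Ec; lia.
    + case: c' Ec => [|c'] Ec; first by lia.
      case: (eqVneq (nat_of_ord y) (b - 1)) => Hy.
        exists k2; apply/andP; split.
          apply: (reach hb' (x:=x) (k:=k2) (n:=c') (y:=(x + 1)) (bm:=(2 * c'.+2))); rewrite /= ?Ec; lia.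
        apply: (reach hb' (x:=y) (k:=k2) (n:=c'.+1) (y:=1) (bm:=(2 * c'.+2))); rewrite /= ?Ec; lia.
      exists y; apply/andP; split.
        apply: (reach hb' (x:=x) (k:=y) (n:=c') (y:=(2 * c - (y - x))) (bm:=(2 * c'.+2))); rewrite ?Ec; lia.
      apply: (reach hb' (x:=y) (k:=y) (n:=c'.+1) (y:=0) (bm:=(2 * c'.+2))); rewrite ?Ec; lia.
move=> i j HP; apply/negPn/negP => Hn.
case: (leqP i j) => Hij.
  have [|k /andP [H1 H2]] := key i j Hij.
    by move=> [H1 H2]; move/negP: Hn; apply; rewrite H1 H2 !eqxx orbT.
  by move: HP; rewrite /P (Pwit H1 H2).
have [|k /andP [H1 H2]] := key j i (ltnW Hij).
  by move=> [H1 H2]; move/negP: Hn; apply; rewrite H1 H2 !eqxx.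
by move: HP; rewrite /P (Pwit H2 H1).
Qed.
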